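(* Let $\mathbf{F}_{\Phi}$ be a fence over the Cantor space $X$, let $H_X:X\to X$ be a continuous surjection and let $T:\mathbf{F}_\Phi\to\mathbf{F}_\Phi$ be a continuous lifting of $H_X$ such that for every $x\in X$ the restriction of $T$ to the fiber $\{x\}\times\mathbf{F}_\Phi(x)$ is a homeomorphism (onto its image). Then the topological entropies satisfy $\mathrm{ent}(T)=\mathrm{ent}(H_X)$.
   Context: For $\Phi=(\varphi^L,\varphi^U)$ with $\varphi^L,\varphi^U:X\to[0,1]$, $\varphi^L$ lower semicontinuous, $\varphi^U$ upper semicontinuous, $\varphi^L\le\varphi^U$, the fence is $\mathbf{F}_\Phi=\{(x,t)\in X\times[0,1]:\varphi^L(x)\le t\le\varphi^U(x)\}$ and $\mathbf{F}_\Phi(x)=\{t:(x,t)\in\mathbf{F}_\Phi\}$. A map $T:\mathbf{F}_\Phi\to\mathbf{F}_\Phi$ is a lifting of $H_X:X\to X$ if $T(x,t)=(H_X(x),s)$ for some $s\in\mathbf{F}_\Phi(H_X(x))$, for every $(x,t)\in\mathbf{F}_\Phi$. *)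

(* Defs.v *)
From HB Require Import structures.
From mathcomp Require Import all_boot all_order all_algebra.
From mathcomp Require Import all_classical all_reals all_analysis.
Set Implicit Arguments. Unset Strict Implicit. Unset Printing Implicit Defensive.
Import Order.TTheory GRing.Theory Num.Theory.
Import numFieldNormedType.Exports.
Local Open Scope classical_set_scope.
Local Open Scope ring_scope.

Definition lsc {R : realType} {X : topologicalType} (f : X -> R) :=
  forall x (a : R), a < f x -> exists2 V, nbhs x V & forall y, V y -> a < f y.
Definition usc {R : realType} {X : topologicalType} (f : X -> R) :=
  forall x (a : R), f x < a -> exists2 V, nbhs x V & forall y, V y -> f y < a.

(* The fence F_Phi = {(x,t) in X x [0,1] : phiL x <= t <= phiU x},
   seen as a subset of X * R (with the subspace topology). *)
Definition fence {R : realType} {X : Type} (phiL phiU : X -> R) : set (X * R) :=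
  [set p | phiL p.1 <= p.2 /\ p.2 <= phiU p.1].

(* Entropy of the restriction of T : Y -> Y to a T-invariant compact set K.
   A (finite) open cover of K is a family U : 'I_k -> set Y of open sets of Y
   whose union contains K (relatively open subsets of K are exactly the
   traces of open subsets of Y). *)

(* element of the join U v T^-1 U v ... v T^-(n-1) U indexed by a word w *)
Definition join_set {Y : Type} (T : Y -> Y) {k : nat} (U : 'I_k -> set Y)
  (n : nat) (w : {ffun 'I_n -> 'I_k}) : set Y :=
  [set y | forall i : 'I_n, U (w i) (iter i T y)].

Definition cover_number {R : realType} {Y : Type} (K : set Y) (T : Y -> Y)
  {k : nat} (U : 'I_k -> set Y) (n : nat) : R :=
  inf [set (#|W|%:R : R) | W in
        [set W : {set {ffun 'I_n -> 'I_k}} |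
          K `<=` [set y | exists2 w, w \in W & join_set T U w y]]].

(* h(T, U) = lim_n (1/n) log N(U v ... v T^-(n-1) U)  (limit = limsup) *)
Definition cover_entropy {R : realType} {Y : Type} (K : set Y) (T : Y -> Y)
  {k : nat} (U : 'I_k -> set Y) : \bar R :=
  limn_esup (fun n => ((ln (cover_number (R:=R) K T U n)) / n%:R)%:E).

Definition top_entropy {R : realType} {Y : topologicalType} (K : set Y)
  (T : Y -> Y) : \bar R :=
  ereal_sup [set e | exists (k : nat) (U : 'I_k -> set Y),
      [/\ (forall i, open (U i)), K `<=` \bigcup_i U i &
          e = cover_entropy (R:=R) K T U]].

(* Main.v *)
Require Import Defs.
From HB Require Import structures.
From mathcomp Require Import all_boot all_order all_algebra.
From mathcomp Require Import all_classical all_reals all_analysis.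
From mathcomp Require Import ring lra zify.
Set Implicit Arguments. Unset Strict Implicit. Unset Printing Implicit Defensive.
Import Order.TTheory GRing.Theory Num.Theory.
Import numFieldNormedType.Exports.
Local Open Scope classical_set_scope.
Local Open Scope ring_scope.

Section CN.
Variable R : realType.

Lemma cn_le (Y : Type) (K : set Y) (f : Y -> Y) k (U : 'I_k -> set Y) n
  (W : {set {ffun 'I_n -> 'I_k}}) :
  K `<=` [set y | exists2 w, w \in W & join_set f U w y] ->
  cover_number (R:=R) K f U n <= #|W|%:R.
Proof.
move=> hW; apply: ge_inf; last by exists W.
by exists 0 => _ [W' _ <-]; exact: ler0n.
Qed.

Lemma cn_lb (Y : Type) (K : set Y) (f : Y -> Y) k (U : 'I_k -> set Y) n (a : R) :
  (exists W : {set {ffun 'I_n -> 'I_k}}, K `<=` [set y | exists2 w, w \in W & join_set f U w y]) ->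
  (forall W : {set {ffun 'I_n -> 'I_k}}, K `<=` [set y | exists2 w, w \in W & join_set f U w y] ->
     a <= #|W|%:R) ->
  a <= cover_number (R:=R) K f U n.
Proof.
move=> [W hW] h; apply: lb_le_inf; first by exists #|W|%:R, W.
by move=> _ [W' hW' <-]; exact: h.
Qed.

Lemma cn_full (Y : Type) (K : set Y) (f : Y -> Y) k (U : 'I_k -> set Y) n :
  (forall y, K y -> forall i : nat, exists j, U j (iter i f y)) ->
  exists W : {set {ffun 'I_n -> 'I_k}}, K `<=` [set y | exists2 w, w \in W & join_set f U w y].
Proof.
move=> h; exists (finset.setT : {set {ffun 'I_n -> 'I_k}}) => y Ky.
have [g hg] := choice (fun i : 'I_n => h y Ky i).
by exists [ffun i => g i]; [rewrite inE | move=> i; rewrite ffunE].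
Qed.

Lemma cn_ge1 (Y : Type) (K : set Y) (f : Y -> Y) k (U : 'I_k -> set Y) n y0 :
  K y0 -> (forall y, K y -> forall i : nat, exists j, U j (iter i f y)) ->
  1 <= cover_number (R:=R) K f U n.
Proof.
move=> Ky0 h; apply: cn_lb; first exact: cn_full.
move=> W hW; have [w wW _] := hW y0 Ky0.
by rewrite ler1n card_gt0; apply/set0Pn; exists w.
Qed.

Lemma limn_esup_inf (u : nat -> \bar R) : limn_esup u = ereal_inf (range (esups u)).
Proof. by rewrite limn_esup_lim; apply: cvg_lim => //; exact: cvg_esups_inf. Qed.

Lemma limsup_bound (a b : nat -> R) (e eps : R) N0 :
  (limn_esup (fun n => (b n)%:E) <= e%:E)%E -> 0 < eps ->
  (forall n, (N0 <= n)%N -> a n <= b n + eps) ->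
  (limn_esup (fun n => (a n)%:E) <= (e + 2 * eps)%:E)%E.
Proof.
move=> hb e0 hab.
have : (ereal_inf (range (esups (fun n => (b n)%:E))) < (e + eps)%:E)%E.
  by rewrite -limn_esup_inf; apply: le_lt_trans hb _; rewrite lte_fin; lra.
move=> /ereal_inf_lt [_ [N _ <-]] hN.
rewrite limn_esup_inf; apply: le_trans (ereal_inf_lbound _) _.
  by exists (maxn N N0).
apply: ge_ereal_sup => _ [n /= hn <-].
have hbn : ((b n)%:E <= esups (fun n => (b n)%:E) N)%E.
  apply: ereal_sup_ubound; exists n => //=.
  by apply: leq_trans hn; rewrite leq_maxl.
have := lt_le_trans (le_lt_trans hbn hN) (lexx _); rewrite lte_fin => hb'.
have := hab n (leq_trans (leq_maxr N N0) hn).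
rewrite lee_fin; lra.
Qed.

Lemma choose_m (L : nat) (eta : R) : 0 < eta ->
  exists m : nat, (0 < m)%N /\ ln ((m * L + 1)%:R : R) <= eta * m%:R.
Proof.
move=> eta0; set m := (Num.Def.trunc (2 * L%:R / eta ^+ 2)).+1.
exists m; split => //.
have hM : 2 * L%:R / eta ^+ 2 < m%:R.
  apply: truncnS_gt.
have e2 : 0 < eta ^+ 2 by rewrite exprn_gt0.
move: hM; rewrite ltr_pdivrMr // => hM.
have M0 : 0 < m%:R :> R by rewrite ltr0n.
have hexp := expR_ge1Dxn 1 (mulr_ge0 (ltW eta0) (ltW M0)).
rewrite -[X in _ <= X]expRK; rewrite ler_ln ?posrE ?expR_gt0 ?ltr0n ?addn1 //.
apply: le_trans hexp; rewrite -addn1 natrD natrM.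
move: hM; set M := m%:R; set l := L%:R; rewrite expr2 => hM.
have l0 : 0 <= l by rewrite /l ler0n.
rewrite (_ : 2`!%:R = 2 :> R) //.
nra.
Qed.

End CN.

Section Fence.
Variable R : realType.
Local Notation X := cantor_space.
Variables (phiL phiU : X -> R) (HX : X -> X) (T : X * R -> X * R).
Hypotheses (hL01 : forall x, 0 <= phiL x <= 1) (hU01 : forall x, 0 <= phiU x <= 1)
  (hlsc : lsc phiL) (husc : usc phiU) (hLU : forall x, phiL x <= phiU x)
  (hT : forall p, fence phiL phiU p -> (T p).1 = HX p.1 /\ fence phiL phiU (T p))
  (hTc : {within fence phiL phiU, continuous T})
  (hinj : forall p q, fence phiL phiU p -> fence phiL phiU q -> p.1 = q.1 -> T p = T q -> p = q).
Local Notation F := (fence phiL phiU).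

Lemma iterF i p : F p -> F (iter i T p) /\ (iter i T p).1 = iter i HX p.1.
Proof.
move=> Fp; elim: i => [|i [Fi Ei]] //=.
by have [h1 h2] := hT Fi; rewrite h1 Ei.
Qed.

Lemma F01 p : F p -> 0 <= p.2 <= 1.
Proof.
case=> h1 h2; have /andP[a _] := hL01 p.1; have /andP[_ b] := hU01 p.1.
by rewrite (le_trans a h1) (le_trans h2 b).
Qed.

Lemma Fx x : F (x, phiL x).
Proof. by split => //=. Qed.

Lemma Tnbhs p B : F p -> nbhs (T p) B -> nbhs p [set q | F q -> B (T q)].
Proof.
move=> Fp NB; move/subspace_continuousP : hTc => /(_ p Fp) h.
exact: (h B NB).
Qed.

Lemma Fclosed : closed F.
Proof.
rewrite -openC openE => p /= nFp; rewrite /interior /=.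
have : p.2 < phiL p.1 \/ phiU p.1 < p.2.
  rewrite /fence in nFp; case: (ltP p.2 (phiL p.1)) => h; first by left.
  case: (ltP (phiU p.1) p.2) => h'; first by right.
  by exfalso; apply: nFp.
case=> [lt|gt].
- pose a := (p.2 + phiL p.1) / 2.
  have [V NV hV] : exists2 V, nbhs p.1 V & forall y, V y -> a < phiL y.
    by apply: hlsc; rewrite /a; lra.
  exists (V, [set s | s < a]) => /=.
    split => //; apply: open_nbhs_nbhs; split; first exact: open_lt.
    by rewrite /a /=; lra.
  case=> z s /= [Vz sa] [h _]; move: sa (hV z Vz) h; rewrite /a /=; lra.
- pose a := (p.2 + phiU p.1) / 2.
  have [V NV hV] : exists2 V, nbhs p.1 V & forall y, V y -> phiU y < a.
    by apply: husc; rewrite /a; lra.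
  exists (V, [set s | a < s]) => /=.
    split => //; apply: open_nbhs_nbhs; split; first exact: open_gt.
    by rewrite /a /=; lra.
  case=> z s /= [Vz sa] [_ h]; move: sa (hV z Vz) h; rewrite /a /=; lra.
Qed.

Lemma Fcompact : compact F.
Proof.
apply: (subclosed_compact Fclosed (B := [set: X] `*` `[(0:R), 1])).
  apply: compact_setX; [exact: cantor_space_compact | exact: segment_compact].
move=> p Fp; have /andP[a b] := F01 Fp; split => //=.
by rewrite in_itv /= a b.
Qed.

Lemma fst_cont : continuous (fst : X * R -> X).
Proof. by move=> q; apply: cvg_fst. Qed.

Lemma iter_nbhs i p (B : set (X * R)) : open B -> F p -> B (iter i T p) ->
  nbhs p [set q | F q -> B (iter i T q)].
Proof.
move=> oB; elim: i p => [|i IH] p Fp.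
  move=> /= Bp; have : nbhs p B by apply: open_nbhs_nbhs.
  by apply: filterS => q Bq _.
rewrite iterSr => Bi.
have FTp : F (T p) by have [] := hT Fp.
have := Tnbhs Fp (IH _ FTp Bi); apply: filterS => q h Fq.
rewrite iterSr; apply: h => //; by have [] := hT Fq.
Qed.

Lemma join_nbhs k m (V : 'I_k -> set (X * R)) (Vo : forall i, open (V i))
  (w : {ffun 'I_m -> 'I_k}) p :
  F p -> join_set T V w p -> nbhs p [set q | F q -> join_set T V w q].
Proof.
move=> Fp jp.
have : \forall q \near p, forall i : 'I_m, F q -> V (w i) (iter i T q).
  have h (i : 'I_m) := iter_nbhs (Vo (w i)) Fp (jp i).
  exact: (@filter_forall _ _ (fun i q => F q -> V (w i) (iter i T q)) (nbhs p) _ h).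
by apply: filterS => q h Fq i; apply: h.
Qed.

Lemma tube k m (V : 'I_k -> set (X * R)) (Vo : forall i, open (V i))
  (W : {set {ffun 'I_m -> 'I_k}}) x :
  (forall t, F (x, t) -> exists2 w, w \in W & join_set T V w (x, t)) ->
  exists O : set X, [/\ open O, O x &
    forall p, F p -> O p.1 -> exists2 w, w \in W & join_set T V w p].
Proof.
move=> hx.
pose G := [set q | exists2 w, w \in W & join_set T V w q].
pose B := F `&` ~` G.
have Bcl : closed B.
  rewrite -openC openE => q /= nBq; rewrite /interior.
  case: (pselect (F q)) => Fq.
  - have Gq : G q.
      by case: (pselect (G q)) => // nG; exfalso; apply: nBq.
    case: Gq => w Ww jw; have := join_nbhs Vo Fq jw.
    by apply: filterS => q' h [Fq' nG]; apply: nG; exists w => //; apply: h.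
  - have : nbhs q (~` F).
      by apply: open_nbhs_nbhs; split => //; rewrite openC; exact: Fclosed.
    by apply: filterS => q' nF [Fq' _]; apply: nF.
have Bcpt : compact B by apply: (subclosed_compact Bcl Fcompact); apply: subIsetl.
have PB : compact (fst @` B).
  by apply: continuous_compact => //; apply: continuous_subspaceT; exact: fst_cont.
have PBcl : closed (fst @` B) by apply: compact_closed => //; exact: cantor_space_hausdorff.
exists (~` (fst @` B)); split.
- exact: closed_openC.
- move=> [q [Fq nGq] qx]; apply: nGq.
  move: Fq; case: q qx => /= z t -> Fq; exact: hx.
- move=> p Fp Op; case: (pselect (G p)) => // nG; exfalso; apply: Op.
  by exists p.
Qed.

HB.instance Definition _ := Pointed.on (X * R)%type.

Lemma pos_below (A : eqType) (s : seq A) (f : A -> R) :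
  (forall a, a \in s -> 0 < f a) -> exists2 d : R, 0 < d & forall a, a \in s -> d <= f a.
Proof.
elim: s => [|a s IH] h; first by exists 1.
have [|d d0 hd] := IH; first by move=> b bs; apply: h; rewrite inE bs orbT.
have fa : 0 < f a by apply: h; rewrite inE eqxx.
exists (Order.min d (f a)); first by rewrite lt_min d0 fa.
move=> b; rewrite inE => /orP[/eqP->|bs]; first by rewrite ge_min lexx orbT.
by rewrite ge_min hd.
Qed.

Lemma lebesgue k (V : 'I_k -> set (X * R)) (Vo : forall i, open (V i))
  (cov : F `<=` \bigcup_i V i) :
  exists2 d : R, 0 < d & forall q, F q ->
    exists i, forall s, `|s - q.2| < d -> V i (q.1, s).
Proof.
have [i0 _ _] := cov _ (Fx point).
have loc : forall p, exists t : 'I_k * set X * R, F p ->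
    [/\ nbhs p.1 t.1.2, 0 < t.2 &
      forall z s, t.1.2 z -> `|s - p.2| < t.2 -> V t.1.1 (z, s)].
  move=> p; case: (pselect (F p)) => Fp; last by exists (i0, setT, 1).
  have [i _ Vip] := cov _ Fp.
  have : nbhs p (V i) by apply: open_nbhs_nbhs.
  case => [[A1 A2] /= [NA1 NA2] sub].
  move/nbhs_ballP : NA2 => [r r0 br].
  exists (i, A1, r) => _; split => // z s Az hs.
  apply: (sub (z, s)); split => //=; apply: br.
  by rewrite /ball /= distrC.
have [f hf] := choice loc.
pose O (p : X * R) := [set q : X * R | (f p).1.2° q.1 /\ `|q.2 - p.2| < (f p).2 / 2].
have Oo p : open (O p).
  rewrite openE => q [q1 q2]; rewrite /interior.
  exists ((f p).1.2°, [set s | `|s - p.2| < (f p).2 / 2]) => /=.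
    split; first by apply: open_nbhs_nbhs; split => //; exact: open_interior.
    apply: open_nbhs_nbhs; split => //.
    rewrite (_ : [set s | _] = ball p.2 ((f p).2 / 2)); first exact: ball_open.
    by apply/funext => s; rewrite /ball /= distrC.
  by case=> z s /= [].
have cc : cover_compact F by rewrite -compact_cover; exact: Fcompact.
have := cc _ F O (fun p _ => Oo p); case.
  move=> q Fq; exists q => //; have [N r0 _] := hf q Fq; split => //.
  by rewrite subrr normr0 divr_gt0.
move=> D' D'F covD.
have [d d0 hd] := @pos_below _ (finmap.enum_fset D') (fun p => (f p).2 / 2) (fun p Dp => 
  ltac:(have [_ r0 _] := hf p (set_mem (D'F p Dp)); exact: divr_gt0 r0 _)).
exists d => // q Fq; have [p Dp [Oq1 Oq2]] := covD q Fq.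
have [_ r0 hV] := hf p (set_mem (D'F p Dp)).
exists (f p).1.1 => s hs; apply: hV; first exact: interior_subset.
have := ler_distD q.2 s p.2; have := hd p Dp; move: hs Oq2; lra.
Qed.

Definition monoR (a b : R) (f : R -> R) :=
  (forall s t, a <= s -> s <= t -> t <= b -> f s <= f t) \/
  (forall s t, a <= s -> s <= t -> t <= b -> f t <= f s).

Lemma snd_nbhs (q : X * R) (B : set R) : nbhs q.2 B -> nbhs q [set q' | B q'.2].
Proof.
move=> NB; exact: (@cvg_snd _ _ (nbhs q.1) (nbhs q.2) _ B NB).
Qed.

Lemma fiber_cont z : {within `[phiL z, phiU z], continuous (fun t => (T (z, t)).2)}.
Proof.
apply/subspace_continuousP => t It B NB.
have Fzt : F (z, t) by move: It; rewrite /= in_itv /= => /andP[].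
have := Tnbhs Fzt (snd_nbhs NB).
case=> [[A1 A2] /= [NA1 NA2] sub].
rewrite /within /=; apply: filterS NA2 => s A2s Is.
apply: (sub (z, s)) => /=; first by split => //; exact: nbhs_singleton.
by move: Is; rewrite /= in_itv /= => /andP[].
Qed.

Lemma fiber_mono z : monoR (phiL z) (phiU z) (fun t => (T (z, t)).2).
Proof.
have inj : {in `[phiL z, phiU z] &, injective (fun t => (T (z, t)).2)}.
  move=> s t; rewrite !in_itv /= => /andP[s1 s2] /andP[t1 t2] e.
  have Fs : F (z, s) by [].
  have Ft : F (z, t) by [].
  have e' : T (z, s) = T (z, t).
    have [h1 _] := hT Fs; have [h2 _] := hT Ft.
    move: h1 h2 e; case: (T (z, s)) => a b; case: (T (z, t)) => a' b' /= -> -> ->.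
    by [].
  by have := hinj Fs Ft erefl e' => -[].
have [h|h] := itv_continuous_inj_mono (@fiber_cont z) inj.
- left => s t s1 st t2; move: st; rewrite le_eqVlt => /orP[/eqP->//|st].
  by apply: ltW; apply: h => //; rewrite in_itv /=; apply/andP; split; lra.
- right => s t s1 st t2; move: st; rewrite le_eqVlt => /orP[/eqP->//|st].
  by apply: ltW; apply: h => //; rewrite in_itv /=; apply/andP; split; lra.
Qed.

Lemma iter_mono k z : monoR (phiL z) (phiU z) (fun t => (iter k T (z, t)).2).
Proof.
elim: k z => [|k IH] z; first by left => s t /= _ ->.
have e t : phiL z <= t <= phiU z -> iter k.+1 T (z, t) = iter k T (HX z, (T (z, t)).2).
  move=> /andP[t1 t2]; have Ft : F (z, t) by [].
  rewrite iterSr; congr (iter k T _); have [<- _] := hT Ft.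
  by case: (T (z, t)).
have inr t : phiL z <= t <= phiU z -> phiL (HX z) <= (T (z, t)).2 <= phiU (HX z).
  move=> /andP[t1 t2]; have Ft : F (z, t) by [].
  have [h1 [h2 h3]] := hT Ft; rewrite -h1; apply/andP; split => //.
have [h|h] := fiber_mono z; have [g|g] := IH (HX z).
- left => s t s1 st t2.
  have sI : phiL z <= s <= phiU z by rewrite s1 (le_trans st t2).
  have tI : phiL z <= t <= phiU z by rewrite t2 (le_trans s1 st).
  rewrite (e s sI) (e t tI) /=; have /andP[a1 a2] := inr s sI; have /andP[b1 b2] := inr t tI.
  by apply: g => //; apply: h.
- right => s t s1 st t2.
  have sI : phiL z <= s <= phiU z by rewrite s1 (le_trans st t2).
  have tI : phiL z <= t <= phiU z by rewrite t2 (le_trans s1 st).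
  rewrite (e s sI) (e t tI) /=; have /andP[a1 a2] := inr s sI; have /andP[b1 b2] := inr t tI.
  by apply: g => //; apply: h.
- right => s t s1 st t2.
  have sI : phiL z <= s <= phiU z by rewrite s1 (le_trans st t2).
  have tI : phiL z <= t <= phiU z by rewrite t2 (le_trans s1 st).
  rewrite (e s sI) (e t tI) /=; have /andP[a1 a2] := inr s sI; have /andP[b1 b2] := inr t tI.
  by apply: g => //; apply: h.
- left => s t s1 st t2.
  have sI : phiL z <= s <= phiU z by rewrite s1 (le_trans st t2).
  have tI : phiL z <= t <= phiU z by rewrite t2 (le_trans s1 st).
  rewrite (e s sI) (e t tI) /=; have /andP[a1 a2] := inr s sI; have /andP[b1 b2] := inr t tI.
  by apply: g => //; apply: h.
Qed.

Definition gr (c s : R) : nat := Num.Def.trunc (s * c).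

Lemma gr_le c s s' : 0 < c -> 0 <= s -> s <= s' -> (gr c s <= gr c s')%N.
Proof.
move=> c0 s0 ss'; apply: le_truncn; by rewrite ler_pM2r.
Qed.

Lemma gr_close d s s' : 0 < d -> 0 <= s -> 0 <= s' ->
  gr (2 / d) s = gr (2 / d) s' -> `|s - s'| < d.
Proof.
move=> d0 s0 s'0; rewrite /gr => e.
set c := 2 / d.
have c0 : 0 < c by rewrite /c divr_gt0.
have /andP[a1 a2] := truncn_itv (mulr_ge0 s0 (ltW c0)).
have /andP[b1 b2] := truncn_itv (mulr_ge0 s'0 (ltW c0)).
move: b1 b2; rewrite -e => b1 b2.
have hc : `|s - s'| * c < 1.
  rewrite -[c]ger0_norm ?(ltW c0) // -normrM mulrBl ltr_norml.
  move: a1 a2 b1 b2; rewrite -natr1; lra.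
have -> : `|s - s'| = (`|s - s'| * c) * (d / 2).
  by rewrite /c; field; rewrite gt_eqF.
have d2 : 0 < d / 2 by rewrite divr_gt0.
apply: (@lt_le_trans _ _ (1 * (d / 2))); first by rewrite ltr_pM2r.
by rewrite mul1r; lra.
Qed.

Lemma col_ex k (V : 'I_k -> set (X * R)) d : 0 < d ->
  (forall q, F q -> exists i, forall s, `|s - q.2| < d -> V i (q.1, s)) ->
  exists col : X -> nat -> 'I_k, forall p, F p -> V (col p.1 (gr (2 / d) p.2)) p.
Proof.
move=> d0 leb.
have [i0 _] := leb _ (Fx point).
have h1 : forall z, exists f : nat -> 'I_k, forall s, F (z, s) -> V (f (gr (2 / d) s)) (z, s).
  move=> z.
  have h2 : forall a, exists i, forall s, F (z, s) -> gr (2 / d) s = a -> V i (z, s).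
    move=> a; case: (pselect (exists s0, F (z, s0) /\ gr (2 / d) s0 = a)).
    + move=> [s0 [F0 g0]]; have [i hi] := leb _ F0; exists i => s Fs gs.
      apply: (hi s); apply: gr_close => //.
      * by have /andP[] := F01 Fs.
      * by have /andP[] := F01 F0.
      * by rewrite gs g0.
    + move=> nex; exists i0 => s Fs gs; exfalso; apply: nex; by exists s.
  have [f hf] := choice h2; exists f => s Fs; exact: hf.
have [col hcol] := choice h1; exists col => -[z s] Fp; exact: hcol.
Qed.

Lemma fiber_count k (V : 'I_k -> set (X * R)) (c : R) (c0 : 0 < c)
  (col : X -> nat -> 'I_k) (colP : forall p, F p -> V (col p.1 (gr c p.2)) p) m x :
  exists W : {set {ffun 'I_m -> 'I_k}}, ((#|W| <= m * gr c 1 + 1)%N) /\ 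
    (forall t, F (x, t) -> exists2 w, w \in W & join_set T V w (x, t)).
Proof.
set L := gr c 1.
pose f (j : nat) t := (iter j T (x, t)).2.
pose sg (j : nat) t := gr c (f j t).
pose word t : {ffun 'I_m -> 'I_k} := [ffun j : 'I_m => col (iter j HX x) (sg j t)].
have wordP t : F (x, t) -> join_set T V (word t) (x, t).
  move=> Ft j; rewrite ffunE; have [Fj Ej] := iterF j Ft.
  by have := colP _ Fj; rewrite Ej.
pose dir (j : nat) := `[< forall s t, phiL x <= s -> s <= t -> t <= phiU x -> f j s <= f j t >].
have dirP j s t : F (x, s) -> F (x, t) -> s <= t ->
    if dir j then (sg j s <= sg j t)%N else (sg j t <= sg j s)%N.
  move=> [s1 _] [_ t2] st.
  have [Fjs _] := iterF j (Fx x).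
  rewrite /dir; case: asboolP => [h|nh].
  - apply: gr_le => //; last by apply: h.
    have Fs : F (x, s) by split => //=; apply: le_trans st t2.
    by have [/F01 /andP[]] := iterF j Fs.
  - have [h|h] := iter_mono j x; first by exfalso; apply: nh.
    apply: gr_le => //; last by apply: h.
    have Ft : F (x, t) by split => //=; apply: le_trans s1 st.
    by have [/F01 /andP[]] := iterF j Ft.
have sgL j t : F (x, t) -> (sg j t <= L)%N.
  move=> Ft; have [/F01 /andP[a b] _] := iterF j Ft; exact: gr_le.
pose psi (j : nat) (a : nat) := if dir j then a else (L - a)%N.
pose Phi t := (\sum_(j < m) psi j (sg j t))%N.
have PhiL t : F (x, t) -> (Phi t <= m * L)%N.
  move=> Ft; rewrite /Phi; apply: (@leq_trans (\sum_(j < m) L)%N); last first.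
    by rewrite sum_nat_const card_ord.
  apply: leq_sum => j _; rewrite /psi; case: (dir j) => //; last exact: leq_subr.
  exact: sgL.
have key t t' : F (x, t) -> F (x, t') -> t <= t' -> Phi t = Phi t' -> word t = word t'.
  move=> Ft Ft' tt' e.
  have le j : (psi j (sg j t) <= psi j (sg j t') ?= iff (psi j (sg j t) == psi j (sg j t')))%N.
    apply: leqif_eq; have := dirP j _ _ Ft Ft' tt'; rewrite /psi.
    by case: (dir j) => // h; apply: leq_sub2l.
  have := (leqif_sum (I := 'I_m) (P := predT) (fun (j : 'I_m) _ => le j)).2.
  rewrite /Phi in e; rewrite e eqxx => /esym /forallP h.
  apply/ffunP => j; rewrite !ffunE; congr col.
  have := h j; rewrite /psi; case: (dir j) => /eqP // e'.
  have := sgL j _ Ft; have := sgL j _ Ft'; lia.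
have pk : forall v : 'I_(m * L + 1), exists t,
    (exists t', F (x, t') /\ Phi t' = v) -> F (x, t) /\ Phi t = v.
  move=> v; case: (pselect (exists t', F (x, t') /\ Phi t' = v)) => [[t' h]|nh].
    by exists t'.
  by exists 0 => h; exfalso; apply: nh.
have [pick pickP] := choice pk.
exists ((fun v => word (pick v)) @: [set: 'I_(m * L + 1)]); split.
  by apply: leq_trans (leq_imset_card _ _) _; apply: leq_trans (max_card _) _; rewrite card_ord.
move=> t Ft; exists (word t); last exact: wordP.
have vlt : (Phi t < m * L + 1)%N by rewrite addn1 ltnS; exact: PhiL.
have [Fp Php] := pickP (Ordinal vlt) (ex_intro _ t (conj Ft erefl)).
apply/imsetP; exists (Ordinal vlt); first by rewrite in_setT.
case/orP: (le_total t (pick (Ordinal vlt))) => [tp|pt].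
- by apply: key => //=; rewrite Php.
- by apply/esym; apply: key => //=; rewrite Php.
Qed.

Lemma base_cover k (V : 'I_k -> set (X * R)) (Vo : forall i, open (V i))
  (c : R) (c0 : 0 < c)
  (col : X -> nat -> 'I_k) (colP : forall p, F p -> V (col p.1 (gr c p.2)) p) m :
  exists r (U : 'I_r -> set X) (Wj : 'I_r -> {set {ffun 'I_m -> 'I_k}}),
    [/\ forall j, open (U j), forall x, exists j, U j x,
        forall j, (#|Wj j| <= m * gr c 1 + 1)%N &
        forall j p, F p -> U j p.1 -> exists2 w, w \in Wj j & join_set T V w p].
Proof.
have h : forall x, exists WO : {set {ffun 'I_m -> 'I_k}} * set X,
    [/\ (#|WO.1| <= m * gr c 1 + 1)%N, open WO.2, WO.2 x &
        forall p, F p -> WO.2 p.1 -> exists2 w, w \in WO.1 & join_set T V w p].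
  move=> x; have [W [Wc Wx]] := @fiber_count k V c c0 col colP m x.
  have [Ot [Oo Ox OP]] := tube Vo Wx.
  by exists (W, Ot); split.
have [g hg] := choice h.
have cc : cover_compact [set: X] by rewrite -compact_cover; exact: cantor_space_compact.
have gcov : [set: X] `<=` cover [set: X] (fun x => (g x).2).
  by move=> x _; exists x => //; have [] := hg x.
have gop : forall x, [set: X] x -> open (g x).2 by move=> x _; have [] := hg x.
have [D' _ covD] := cc _ [set: X] (fun x => (g x).2) gop gcov.
pose s := finmap.enum_fset D'.
exists (size s), (fun j => (g (nth point s j)).2), (fun j => (g (nth point s j)).1).
split.
- by move=> j; have [] := hg (nth point s j).
- move=> x; have [y Dy Oy] := covD x I.
  have ys : y \in s by [].
  exists (Ordinal (ltac:(by rewrite index_mem) : (index y s < size s)%N)) => /=.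
  by rewrite nth_index.
- by move=> j; have [] := hg (nth point s j).
- by move=> j p Fp Up; have [_ _ _] := hg (nth point s j); apply.
Qed.

Lemma combine k (V : 'I_k -> set (X * R)) m (hm : (0 < m)%N) r (U : 'I_r -> set X)
  (Wj : 'I_r -> {set {ffun 'I_m -> 'I_k}}) c' (hc' : (0 < c')%N)
  (hWj : forall j, (#|Wj j| <= c')%N)
  (hcov : forall j p, F p -> U j p.1 -> exists2 w, w \in Wj j & join_set T V w p)
  (w0 : {ffun 'I_m -> 'I_k}) n (WH : {set {ffun 'I_n -> 'I_r}}) :
  [set: X] `<=` [set y | exists2 u, u \in WH & join_set HX U u y] ->
  exists WT : {set {ffun 'I_n -> 'I_k}}, ((#|WT| <= #|WH| * c' ^ (n %/ m).+1)%N) /\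
    (F `<=` [set y | exists2 w, w \in WT & join_set T V w y]).
Proof.
move=> hWH.
pose e (j : 'I_r) (v : 'I_c') := nth w0 (enum (Wj j)) v.
have bsP (i : 'I_n) : (i %/ m * m < n)%N := leq_ltn_trans (leq_divM i m) (ltn_ord i).
have blP (i : 'I_n) : (i %/ m < (n %/ m).+1)%N.
  by rewrite ltnS; apply: leq_div2r; apply: ltnW.
pose Psi (ub : {ffun 'I_n -> 'I_r} * {ffun 'I_(n %/ m).+1 -> 'I_c'}) : {ffun 'I_n -> 'I_k} :=
  [ffun i : 'I_n => e (ub.1 (Ordinal (bsP i))) (ub.2 (Ordinal (blP i))) (Ordinal (ltn_pmod i hm))].
exists (Psi @: finset.setX WH [set: {ffun 'I_(n %/ m).+1 -> 'I_c'}]); split.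
  apply: leq_trans (leq_imset_card _ _) _; rewrite cardsX cardsT card_ffun !card_ord.
  by [].
move=> y Fy; have [u uW ju] := hWH y.1 I.
have hv : forall l : 'I_(n %/ m).+1, exists v : 'I_c', forall i : 'I_n, (i %/ m)%N = l ->
    join_set T V (e (u (Ordinal (bsP i))) v) (iter (i %/ m * m)%N T y).
  move=> l; case: (pselect (exists i : 'I_n, (i %/ m)%N = l)) => [[i0 hi0]|nex]; last first.
    by exists (Ordinal hc') => i hi; exfalso; apply: nex; exists i.
  set j := u (Ordinal (bsP i0)).
  have [Fi Ei] := iterF (i0 %/ m * m)%N Fy.
  have Uj : U j (iter (i0 %/ m * m)%N T y).1 by rewrite Ei; exact: (ju (Ordinal (bsP i0))).
  have [w wW jw] := hcov j _ Fi Uj.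
  have wl : (index w (enum (Wj j)) < c')%N.
    by apply: leq_trans (hWj j); rewrite cardE index_mem mem_enum.
  exists (Ordinal wl) => i hi.
  have -> : Ordinal (bsP i) = Ordinal (bsP i0) by apply: val_inj => /=; rewrite hi hi0.
  have -> : (i %/ m = i0 %/ m)%N by rewrite hi hi0.
  by rewrite /e /= nth_index ?mem_enum.
have [bf hbf] := choice hv.
exists (Psi (u, [ffun l => bf l])).
  by apply/imsetP; exists (u, [ffun l => bf l]) => //; rewrite !inE /= uW.
move=> i; rewrite ffunE /= ffunE.
have := hbf (Ordinal (blP i)) i erefl (Ordinal (ltn_pmod i hm)).
by rewrite -iterD /= addnC -divn_eq.
Qed.

Lemma cn_lift k (U : 'I_k -> set X) n :
  cover_number (R:=R) F T (fun i => U i `*` [set: R]) n = cover_number (R:=R) [set: X] HX U n.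
Proof.
rewrite /cover_number; congr (inf (image _ _)); apply/funext => W; apply/propext; split => hW.
- move=> x _; have [w wW jw] := hW _ (Fx x); exists w => // i.
  by have [_ e] := iterF i (Fx x); have [+ _] := jw i; rewrite e.
- move=> p Fp; have [w wW jw] := hW p.1 I; exists w => // i; split => //.
  by rewrite (iterF i Fp).2; exact: jw.
Qed.

Lemma ent_ge : (top_entropy (R:=R) [set: X] HX <= top_entropy (R:=R) F T)%E.
Proof.
apply: le_ereal_sup => e [k [U [Uo Ucov ->]]].
exists k, (fun i => U i `*` [set: R]); split.
- move=> i; rewrite openE => p [Up _]; rewrite /interior.
  exists (U i, [set: R]) => /=; last by case=> z s [].
  by split; [apply: open_nbhs_nbhs; split | exact: filterT].
- by move=> p Fp; have [i _ Ui] := Ucov p.1 I; exists i.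
- by rewrite /cover_entropy; congr limn_esup; apply/funext => n; rewrite cn_lift.
Qed.

Lemma NT_le k (V : 'I_k -> set (X * R)) m (hm : (0 < m)%N) r (U : 'I_r -> set X)
  (Wj : 'I_r -> {set {ffun 'I_m -> 'I_k}}) c' (hc' : (0 < c')%N)
  (hWj : forall j, (#|Wj j| <= c')%N)
  (hcov : forall j p, F p -> U j p.1 -> exists2 w, w \in Wj j & join_set T V w p)
  (w0 : {ffun 'I_m -> 'I_k}) (hUcov : forall x, exists j, U j x) n :
  cover_number (R:=R) F T V n <=
    cover_number (R:=R) [set: X] HX U n * (c' ^ (n %/ m).+1)%:R.
Proof.
have C0 : 0 < (c' ^ (n %/ m).+1)%:R :> R by rewrite ltr0n expn_gt0 hc'.
rewrite -ler_pdivrMr //; apply: cn_lb; first by apply: cn_full => y _ i; exact: hUcov.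
move=> WH hWH.
have [WT [cWT covT]] := combine hm hc' hWj hcov w0 hWH.
rewrite ler_pdivrMr //; apply: le_trans (cn_le R covT) _.
by rewrite -natrM ler_nat.
Qed.

Lemma Vcov_iter k (V : 'I_k -> set (X * R)) (cov : F `<=` \bigcup_i V i) :
  forall y, F y -> forall i : nat, exists j, V j (iter i T y).
Proof.
move=> y Fy i; have [Fi _] := iterF i Fy; have [j _ Vj] := cov _ Fi; by exists j.
Qed.

Lemma ent_nonneg : (0 <= top_entropy (R:=R) [set: X] HX)%E.
Proof.
apply: (@le_trans _ _ (cover_entropy (R:=R) [set: X] HX (fun _ : 'I_1 => [set: X]))).
  apply: limf_esup_ge0 => [|n]; first exact: filter_not_empty.
  rewrite lee_fin divr_ge0 // ln_ge0 //.
  apply: (@cn_ge1 R _ _ _ _ _ _ point) => // y _ i; by exists ord0.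
apply: ereal_sup_ubound; exists 1%N, (fun _ => [set: X]); split => //.
  by move=> _; exact: openT.
by move=> x _; exists ord0.
Qed.

Lemma cover_ent_le k (V : 'I_k -> set (X * R)) (Vo : forall i, open (V i))
  (cov : F `<=` \bigcup_i V i) :
  (cover_entropy (R:=R) F T V <= top_entropy (R:=R) [set: X] HX)%E.
Proof.
have E0 := ent_nonneg.
move: E0; set E := top_entropy _ _; case HE : E => [e| |] E0; last 2 first.
- exact: leey.
- by move: E0; rewrite leeNy_eq.
apply/lee_addgt0Pr => eps eps0.
set eta := eps / 4.
have eta0 : 0 < eta by rewrite /eta divr_gt0.
have [d d0 leb] := lebesgue Vo cov.
have [col colP] := col_ex d0 leb.
set c := 2 / d.
have c0 : 0 < c by rewrite /c divr_gt0.
have [m [hm hlnm]] := choose_m (gr c 1) eta0.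
have [r [U [Wj [Uo Ucov hWj hcovj]]]] := base_cover Vo c0 colP m.
set c' := (m * gr c 1 + 1)%N.
have [i0 _] := leb _ (Fx point).
pose w0 : {ffun 'I_m -> 'I_k} := [ffun => i0].
have hH : (cover_entropy (R:=R) [set: X] HX U <= e%:E)%E.
  rewrite -HE; apply: ereal_sup_ubound; exists r, U; split => //.
  by move=> x _; have [j Uj] := Ucov x; exists j.
have hc' : (0 < c')%N by rewrite /c' addn1.
set lc := ln (c'%:R : R).
have lc0 : 0 <= lc by rewrite /lc ln_ge0 // ler1n.
have lcm : lc <= eta * m%:R by [].
set N0 := (Num.Def.trunc (lc / eta)).+1.
have key n : (N0 <= n)%N ->
    ln (cover_number (R:=R) F T V n) / n%:R <=
    ln (cover_number (R:=R) [set: X] HX U n) / n%:R + eps / 2.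
  move=> hn.
  have n0 : (0 < n)%N by apply: leq_trans hn.
  have n0' : 0 < n%:R :> R by rewrite ltr0n.
  have NT1 : 1 <= cover_number (R:=R) F T V n.
    apply: (@cn_ge1 R _ _ _ _ _ _ (point, phiL point)); [exact: Fx | exact: Vcov_iter].
  have NH1 : 1 <= cover_number (R:=R) [set: X] HX U n.
    by apply: (@cn_ge1 R _ _ _ _ _ _ point) => // y _ i; exact: Ucov.
  have hle := NT_le hm hc' hWj hcovj w0 Ucov n.
  set NT := cover_number F T V n in NT1 hle *.
  set NH := cover_number [set: X] HX U n in NH1 hle *.
  set q := (n %/ m)%N.
  have lnle : ln NT <= ln NH + q.+1%:R * lc.
    have C0 : 0 < (c'%:R : R) by rewrite ltr0n.
    have NT0 : 0 < NT by apply: lt_le_trans NT1.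
    have NH0 : 0 < NH by apply: lt_le_trans NH1.
    have Cp : 0 < (c' ^ q.+1)%:R :> R by rewrite ltr0n expn_gt0 hc'.
    apply: (@le_trans _ _ (ln (NH * (c' ^ q.+1)%:R))).
      by rewrite ler_ln ?posrE ?mulr_gt0.
    by rewrite lnM ?posrE // natrX lnXn // mulr_natl.

  have qm : q%:R * m%:R <= n%:R :> R by rewrite -natrM ler_nat leq_divM.
  have lcn : lc <= eta * n%:R.
    have h1 : lc / eta < N0%:R by apply: truncnS_gt.
    have h2 : N0%:R <= n%:R :> R by rewrite ler_nat.
    move: (lt_le_trans h1 h2); rewrite ltr_pdivrMr // => h3.
    by rewrite mulrC ltW.
  rewrite ler_pdivrMr // mulrDl divfK ?gt_eqF //.
  apply: le_trans lnle _; rewrite lerD2l.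
  have q0 : 0 <= q%:R :> R by rewrite ler0n.
  have -> : q.+1%:R = q%:R + 1 :> R by rewrite -natr1.
  have -> : eps / 2 = 2 * eta by rewrite /eta; field.
  have ar : forall a b x y z : R, b <= a * y -> b <= a * z -> x * y <= z ->
      0 <= x -> 0 <= b -> 0 <= a -> (x + 1) * b <= 2 * a * z.
    move=> a b x y z; nra.
  exact: ar lcm lcn qm q0 lc0 (ltW eta0).
rewrite /cover_entropy; rewrite /cover_entropy in hH.
have eps2 : 0 < eps / 2 by rewrite divr_gt0.
have := @limsup_bound R (fun n => ln (cover_number (R:=R) F T V n) / n%:R)
  (fun n => ln (cover_number (R:=R) [set: X] HX U n) / n%:R) e (eps / 2) N0 hH eps2 key.
move=> h; apply: le_trans h _.
by rewrite -EFinD lee_fin; lra.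
Qed.

Lemma ent_eq : top_entropy (R:=R) F T = top_entropy (R:=R) [set: X] HX.
Proof.
apply/eqP; rewrite eq_le ent_ge andbT.
apply: ge_ereal_sup => _ [k [V [Vo Vcov ->]]]; exact: cover_ent_le.
Qed.

End Fence.

Unset Implicit Arguments.

Theorem proposition3p2 (R : realType) (phiL phiU : cantor_space -> R)
  (HX : cantor_space -> cantor_space) (T : cantor_space * R -> cantor_space * R) :
  (forall x, 0 <= phiL x <= 1) -> (forall x, 0 <= phiU x <= 1) ->
  lsc phiL -> usc phiU -> (forall x, phiL x <= phiU x) ->
  continuous HX -> (forall y, exists x, HX x = y) ->
  (* T maps the fence to itself and is a lifting of HX *)
  (forall p, fence phiL phiU p ->
     (T p).1 = HX p.1 /\ fence phiL phiU (T p)) ->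
  {within fence phiL phiU, continuous T} ->
  (* restriction of T to each fiber {x} x F(x) is a homeomorphism onto its image *)
  (forall x, let Fx := [set p | p.1 = x /\ fence phiL phiU p] in
     [/\ {within Fx, continuous T},
         (forall p q, Fx p -> Fx q -> T p = T q -> p = q) &
         exists S : cantor_space * R -> cantor_space * R,
           (forall p, Fx p -> S (T p) = p) /\ {within T @` Fx, continuous S}]) ->
  top_entropy (R:=R) (fence phiL phiU) T = top_entropy (R:=R) [set: cantor_space] HX.
Proof.
move=> hL hU hl hu hLU _ _ hT hTc hfib.
apply: ent_eq => // p q Fp Fq e eT.
have [_ inj _] := hfib p.1.
by apply: inj => //=; split.
Qed.
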